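(* There exist positive integers $c_{i,k}$, for all $i\ge0$ and $i+1\le k\le 2^i$, such that for all $n\ge1$, \[ b_i(\mathcal{A}_n)=\sum_{k=i+1}^{2^i} c_{i,k}\,S(n+1,k). \] Moreover, $c_{i,k}\le \binom{2^i-1}{k-1}\frac{(k-1)!}{i!}$.
   Context: For $n\ge1$, the resonance arrangement $\mathcal{A}_n$ is the arrangement in $\mathbb{R}^n$ of the hyperplanes $H_I=\{x:\sum_{i\in I}x_i=0\}$ for all nonempty $I\subseteq[n]$. For an arrangement $\mathcal{A}$ in $\mathbb{F}^n$, its characteristic polynomial is $\chi(\mathcal{A};t)=\sum_{S\subseteq\mathcal{A}}(-1)^{|S|}t^{r(\mathcal{A})-r(S)}$ where $r(S)=\operatorname{codim}\bigcap_{H\in S}H$, and the $i$-th Betti number $b_i(\mathcal{A})$ is the absolute value of the coefficient of $t^{n-i}$ in $\chi(\mathcal{A};t)$. $S(n,k)$ denotes the Stirling number of the second kind, the number of partitions of an $n$-element set into $k$ nonempty blocks. *)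

(* Defs.v *)
From HB Require Import structures.
From mathcomp Require Import all_boot all_order all_algebra.
From mathcomp Require Import Rstruct.
From Stdlib Require Rdefinitions.
Set Implicit Arguments. Unset Strict Implicit. Unset Printing Implicit Defensive.
Import Order.TTheory GRing.Theory Num.Theory.
Local Open Scope ring_scope.

(* Normal vector of H_I = {x : sum_{i in I} x_i = 0} in R^n, as a column. *)
Definition normal_vec (n : nat) (I : {set 'I_n}) : 'cV[Rdefinitions.R]_n :=
  \col_(j < n) (if j \in I then 1 else 0).

Definition hyperplane (n : nat) (I : {set 'I_n}) : 'M[Rdefinitions.R]_n :=
  kermx (normal_vec I).

Definition resonance_idx (n : nat) : {set {set 'I_n}} :=
  [set I : {set 'I_n} | I != set0].

(* r(S) = codim of the intersection of the hyperplanes in S (intersection of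
   the empty family is the whole space R^n). *)
Definition rk (n : nat) (S : {set {set 'I_n}}) : nat :=
  subn n (\rank (\bigcap_(I in S) hyperplane I)%MS).

Definition char_poly_res (n : nat) : {poly int} :=
  \sum_(S in powerset (resonance_idx n))
     ((-1) ^+ #|S|) *: 'X^(subn (rk (resonance_idx n)) (rk S)).

Definition betti (n i : nat) : nat :=
  if (i <= n)%N then absz ((char_poly_res n)`_(subn n i)) else 0%N.

Definition stirling2 (m k : nat) : nat :=
  #|[set P : {set {set 'I_m}} | partition P [set: 'I_m] & #|P| == k]|.

(* Main.v *)
Require Import Defs.
From HB Require Import structures.
From mathcomp Require Import all_boot all_order all_algebra.
Import Order.TTheory GRing.Theory Num.Theory.
From mathcomp Require Import zify.
From mathcomp Require Import Rstruct.
From Stdlib Require Rdefinitions.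
Set Implicit Arguments. Unset Strict Implicit. Unset Printing Implicit Defensive.
Local Open Scope ring_scope.
Section Span.
Variables (F : fieldType) (E : finType) (n : nat) (v : E -> 'rV[F]_n).

Definition span (S : {set E}) : 'M[F]_n := (\sum_(e in S) <<v e>>)%MS.
Definition rkv S := \rank (span S).

Lemma span_subP p (A : 'M[F]_(p, n)) (S : {set E}) :
  reflect (forall e, e \in S -> (v e <= A)%MS) (span S <= A)%MS.
Proof.
apply: (iffP sumsmx_subP) => H e eS.
  by rewrite -genmxE H.
by rewrite genmxE H.
Qed.

Lemma mem_span e (S : {set E}) : e \in S -> (v e <= span S)%MS.
Proof. by move=> eS; rewrite -genmxE (sumsmx_sup e). Qed.

Lemma spanS (S S' : {set E}) : S \subset S' -> (span S <= span S')%MS.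
Proof. by move=> /subsetP sS; apply/span_subP => e /sS; apply: mem_span. Qed.

Lemma span_ker p (c : 'M[F]_(n, p)) (S : {set E}) :
  (span S <= kermx c)%MS = [forall e in S, v e *m c == 0].
Proof.
apply/span_subP/forall_inP => H e eS; first by rewrite -sub_kermx H.
by rewrite sub_kermx H.
Qed.

Lemma span0 : span set0 = 0.
Proof. by rewrite /span big_pred0 // => e; rewrite inE. Qed.

Lemma span_U1 e (S : {set E}) : (span (e |: S) :=: <<v e>> + span S)%MS.
Proof.
apply/eqmxP/andP; split.
  apply/span_subP => f; rewrite !inE => /orP[/eqP->|fS].
    by rewrite -genmxE addsmxSl.
  by apply: submx_trans (addsmxSr _ _); apply: mem_span.
by rewrite addsmx_sub genmxE mem_span ?setU11 //= spanS // subsetUr.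
Qed.

Lemma span_addK e (S : {set E}) : (v e <= span S)%MS -> (span (e |: S) :=: span S)%MS.
Proof.
move=> H; apply: eqmx_trans (span_U1 e S) _.
by apply/eqmxP; rewrite addsmx_sub genmxE H submx_refl addsmxSr.
Qed.

Lemma rkv_U1 e (S : {set E}) : (rkv (e |: S) <= (rkv S).+1)%N.
Proof.
rewrite /rkv (span_U1 e S).
apply: leq_trans (mxrank_adds_leqif _ _) _.
by rewrite mxrank_gen rank_rV addnC -[X in (_ <= X)%N]addn1 leq_add2l leq_b1.
Qed.

Lemma rkv_U1_gt e (S : {set E}) : ~~ (v e <= span S)%MS -> rkv (e |: S) = (rkv S).+1.
Proof.
move=> H; apply/eqP; rewrite eqn_leq rkv_U1 /=.
apply: rank_ltmx; rewrite ltmxE spanS ?subsetUr //=.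
by apply: contra H => H; apply: submx_trans H; apply: mem_span; rewrite setU11.
Qed.

Lemma rkv_card (S : {set E}) : (rkv S <= #|S|)%N.
Proof.
have [k] := ubnP #|S|; elim: k S => // k IH S.
case: (set_0Vmem S) => [->|[e eS]]; first by rewrite /rkv span0 mxrank0.
rewrite -(setD1K eS) cardsU1 !inE eqxx /= => Hk.
apply: leq_trans (rkv_U1 _ _) _; rewrite ltnS IH //.
Qed.

Definition tog (S : {set E}) e := if e \in S then S :\ e else e |: S.

Lemma span_tog e (S : {set E}) : (v e <= span (S :\ e))%MS -> (span (tog S e) :=: span S)%MS.
Proof.
move=> H; rewrite /tog; case: ifP => eS.
  by apply: eqmx_sym; rewrite -{1}(setD1K eS); apply: span_addK.
have -> : S = S :\ e by apply/setP=> f; rewrite !inE; case: eqP => // ->; rewrite eS.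
by apply: span_addK.
Qed.

End Span.

Section Inv.
Variables (F : fieldType) (E : finType) (n : nat) (v : E -> 'rV[F]_n).
Variables (key : E -> nat) (key_inj : injective key) (G : {set E}).
Hypothesis Hnz : forall e, e \in G -> v e != 0.

Definition above e (S : {set E}) := [set f in S | (key e < key f)%N].
Definition bad (S : {set E}) e := (e \in G) && (v e <= span v (above e S))%MS.
Definition good (S : {set E}) := [forall e, ~~ bad S e].

Lemma key_min (A : {set E}) : A != set0 ->
  exists2 e, e \in A & forall f, f \in A -> (key e <= key f)%N.
Proof.
case/set0Pn => e0 He0.
have ex : exists k, [exists e in A, key e == k].
  by exists (key e0); apply/exists_inP; exists e0.
case: (ex_minnP ex) => k /exists_inP [e eA /eqP ke] min.
exists e => // f fA; rewrite ke; apply: min; apply/exists_inP; exists f => //.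
Qed.

Lemma in_tog (S : {set E}) e f :
  (f \in tog S e) = if f == e then e \notin S else f \in S.
Proof.
rewrite /tog; case: ifP => eS; rewrite !inE; case: eqP => // ->; by rewrite eS.
Qed.

Lemma tog_tog (S : {set E}) e : tog (tog S e) e = S.
Proof.
apply/setP => f; rewrite !in_tog eqxx negbK.
by case: (f =P e) => [->|].
Qed.

Lemma bad_span (S : {set E}) e : bad S e -> (v e <= span v (S :\ e))%MS.
Proof.
case/andP=> _ H; apply: submx_trans H _; apply: spanS; apply/subsetP => f.
by rewrite !inE => /andP[fS ef]; rewrite fS andbT; apply/eqP => fe; rewrite fe ltnn in ef.
Qed.

Lemma bad_tog (S : {set E}) e0 e : bad S e0 -> bad (tog S e0) e = bad S e.
Proof.
move=> b0; rewrite /bad; congr (_ && _).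
case: (leqP (key e0) (key e)) => He.
  congr (_ <= _)%MS; congr (span v _); apply/setP => f; rewrite !inE in_tog.
  by case: eqP => // ->; rewrite ltnNge He !andbF.
have -> : above e (tog S e0) = tog (above e S) e0.
  apply/setP => f; rewrite !inE !in_tog !inE; case: eqP => [->|//].
  by rewrite He !andbT.
have H : (v e0 <= span v (above e S :\ e0))%MS.
  case/andP: b0 => _ H; apply: submx_trans H _; apply: spanS; apply/subsetP => f.
  rewrite !inE => /andP[fS ef]; rewrite fS (ltn_trans He ef) /= andbT.
  by apply/eqP => fe; rewrite fe ltnn in ef.
by rewrite (span_tog H).
Qed.

Definition first (S : {set E}) :=
  [pick e | bad S e && [forall f, bad S f ==> (key e <= key f)%N]].

Lemma first_tog (S : {set E}) e0 : bad S e0 -> first (tog S e0) = first S.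
Proof.
move=> b0; apply: eq_pick => e; rewrite bad_tog //; congr (_ && _).
by apply: eq_forallb => f; rewrite bad_tog.
Qed.

Lemma firstN (S : {set E}) : (first S == None) = good S.
Proof.
rewrite /first; case: pickP => [e /andP[be _]|H] /=.
  by apply/esym/negP => /forallP/(_ e); rewrite be.
apply/esym/forallP => e; apply/negP => be.
have ne : [set f | bad S f] != set0 by apply/set0Pn; exists e; rewrite inE.
have [f] := key_min ne; rewrite inE => bf min.
move: (H f); rewrite bf /=; move/negP; apply; apply/forallP => g; apply/implyP => bg.
by apply: min; rewrite inE.
Qed.

Definition inv (S : {set E}) := if first S is Some e then tog S e else S.

Lemma first_bad (S : {set E}) e : first S = Some e -> bad S e.
Proof. by rewrite /first; case: pickP => [f /andP[bf _] [<-]|]. Qed.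

Lemma inv_invol : involutive inv.
Proof.
move=> S; rewrite /inv; case E1: (first S) => [e|]; last by rewrite E1.
by rewrite first_tog ?E1 ?tog_tog //; apply: first_bad.
Qed.

Lemma tog_sign (S : {set E}) e : (-1) ^+ #|tog S e| = - (-1) ^+ #|S| :> int.
Proof.
rewrite /tog; case: ifP => eS.
  by rewrite [in RHS](cardsD1 e S) eS exprS mulN1r opprK.
by rewrite cardsU1 eS exprS mulN1r.
Qed.

Lemma good_sub (S S' : {set E}) : S' \subset S -> good S -> good S'.
Proof.
move=> sS /forallP gS; apply/forallP => e; apply: contra (gS e).
case/andP => eG H; rewrite /bad eG; apply: submx_trans H _; apply: spanS.
by apply/subsetP => f; rewrite !inE => /andP[/(subsetP sS) -> ->].
Qed.

Lemma good_rank (S : {set E}) : S \subset G -> good S -> rkv v S = #|S|.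
Proof.
have [k] := ubnP #|S|; elim: k S => // k IH S.
have [->|ne] := eqVneq S set0; first by rewrite /rkv span0 mxrank0 cards0.
have [e eS min] := key_min ne => Hk sG gS.
have eq1 : above e S = S :\ e.
  apply/setP => f; rewrite !inE; apply/andP/andP => [[fS ef]|[ef fS]]; split => //.
    by apply/eqP => fe; rewrite fe ltnn in ef.
  rewrite ltn_neqAle min // andbT; apply: contra ef => /eqP kf.
  by rewrite (key_inj kf).
have sG' : S :\ e \subset G by apply: subset_trans sG; apply: subsetDl.
have gS' : good (S :\ e) by apply: good_sub gS; apply: subsetDl.
have nb : ~~ (v e <= span v (S :\ e))%MS.
  by move/forallP: gS => /(_ e); rewrite /bad (subsetP sG e eS) eq1.
rewrite -(setD1K eS) rkv_U1_gt // IH //.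
  by rewrite cardsU1 !inE eqxx.
by move: Hk; rewrite (cardsD1 e S) eS.
Qed.

Lemma inv_sum (P : {set E} -> bool)
  (HP : forall (S : {set E}) e, S \subset G -> bad S e -> P (tog S e) = P S) (i : nat) :
  \sum_(S : {set E} | (S \subset G) && P S && (rkv v S == i)) (-1) ^+ #|S|
  = (-1) ^+ i * #|[set S : {set E} | (S \subset G) && P S && good S && (#|S| == i)]|%:Z
  :> int.
Proof.
rewrite (bigID good) /=.
set Q := fun S : {set E} => (S \subset G) && P S && (rkv v S == i) && ~~ good S.
have Qinv S : Q (inv S) = Q S.
  rewrite /Q /inv; case E1: (first S) => [e|//].
  have be := first_bad E1.
  have gG : (good (tog S e)) = good S.
    by apply: eq_forallb => f; rewrite bad_tog.
  have sp := span_tog (bad_span be).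
  have sub : (tog S e \subset G) = (S \subset G).
    apply/idP/idP => /subsetP H; apply/subsetP => f fS.
      have := H f; rewrite in_tog; case: eqP => [->|_]; last by apply.
      by case/andP: be.
    move: fS; rewrite in_tog; case: eqP => [->|_ /H //]; by case/andP: be.
  rewrite gG sub /rkv sp.
  by case sG: (S \subset G) => //=; rewrite HP.
have -> : \sum_(S | Q S) (-1) ^+ #|S| = 0 :> int.
  set X := \sum_(S | Q S) _.
  have : X = - X.
    rewrite {1}/X (reindex_inj (can_inj inv_invol)) /= /X.
    rewrite -sumrN; apply: eq_big => S; first by rewrite Qinv.
    move=> QS; rewrite /inv; case E1: (first S) => [e|]; first by rewrite tog_sign.
    by move: QS; rewrite Qinv /Q /= -firstN E1 andbF.
  by lia.
rewrite addr0.
have -> : \sum_(S : {set E} | (S \subset G) && P S && (rkv v S == i) && good S) (-1) ^+ #|S|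
   = \sum_(S in [set S : {set E} | (S \subset G) && P S && good S && (#|S| == i)])
       ((-1) ^+ i : int).
  apply: eq_big => S; rewrite ?inE.
    case sG: (S \subset G); case gS: (good S); rewrite ?andbF ?andbT //=.
    by rewrite good_rank.
  by case/andP => /andP[/andP[sG _] /eqP <-] gS; rewrite good_rank.
by rewrite sumr_const -mulr_natr natz.
Qed.
End Inv.

Section TWorld.
Variable F : fieldType.

Definition ind m (J : {set 'I_m}) : 'rV[F]_m := \row_(j < m) (if j \in J then 1 else 0).
Definition Gm m := [set J : {set 'I_m} | J != set0].
Definition sep m (T : {set {set 'I_m}}) :=
  [forall j : 'I_m, exists J in T, j \in J] &&
  [forall j : 'I_m, forall j' : 'I_m, (j != j') ==> [exists J in T, (j \in J) != (j' \in J)]].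

Definition cj m (j : 'I_m) : 'cV[F]_m := delta_mx j 0.

Lemma ind_col m (J : {set 'I_m}) j : (ind J *m cj j == 0) = (j \notin J).
Proof.
rewrite /cj -colE; apply/eqP/idP => [/matrixP/(_ 0 0)|]; rewrite ?mxE.
  by case: (j \in J) => //; move/eqP; rewrite oner_eq0.
by move=> /negPf H; apply/matrixP => a b; rewrite !mxE H.
Qed.

Lemma ind_col2 m (J : {set 'I_m}) j j' :
  (ind J *m (cj j - cj j') == 0) = ((j \in J) == (j' \in J)).
Proof.
rewrite /cj mulmxBr -!colE subr_eq0; apply/eqP/eqP => [/matrixP/(_ 0 0)|]; rewrite ?mxE.
  by case: (j \in J); case: (j' \in J) => //; move/eqP; rewrite ?oner_eq0 // eq_sym oner_eq0.
by move=> H; apply/matrixP => a b; rewrite !mxE H.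
Qed.

Lemma sep_span m (T : {set {set 'I_m}}) :
  sep T = [forall j : 'I_m, ~~ (span (@ind m) T <= kermx (cj j))%MS] &&
    [forall j : 'I_m, forall j' : 'I_m, (j != j') ==>
       ~~ (span (@ind m) T <= kermx (cj j - cj j'))%MS].
Proof.
congr (_ && _); apply: eq_forallb => j.
  rewrite span_ker negb_forall_in; apply: eq_existsb => J.
  by rewrite ind_col negbK.
apply: eq_forallb => j'; congr (_ ==> _).
rewrite span_ker negb_forall_in; apply: eq_existsb => J.
by rewrite ind_col2.
Qed.

Lemma sep_eqmx m (T T' : {set {set 'I_m}}) :
  (span (@ind m) T :=: span (@ind m) T')%MS -> sep T = sep T'.
Proof.
move=> H; rewrite !sep_span; congr (_ && _).
  by apply: eq_forallb => j; rewrite H.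
by apply: eq_forallb => j; apply: eq_forallb => j'; rewrite H.
Qed.

Definition Dsum m (i : nat) : int :=
  \sum_(T : {set {set 'I_m}} | (T \subset Gm m) && sep T && (rkv (@ind m) T == i))
     (-1) ^+ #|T|.

Definition gcount m (key : {set 'I_m} -> nat) (i : nat) :=
  #|[set T : {set {set 'I_m}} |
      (T \subset Gm m) && sep T && good (@ind m) key (Gm m) T && (#|T| == i)]|.

Lemma Dsum_good m key (key_inj : injective key) i :
  Dsum m i = (-1) ^+ i * (@gcount m key i)%:Z.
Proof.
rewrite /Dsum (inv_sum key_inj) //.
move=> S e _ be; apply: sep_eqmx; apply: span_tog.
exact: bad_span be.
Qed.

Lemma gcount_key m k1 k2 (i1 : injective k1) (i2 : injective k2) i :
  @gcount m k1 i = @gcount m k2 i.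
Proof.
have := Dsum_good i1 i; rewrite (Dsum_good i2) => /(congr1 ( *%R ((-1) ^+ i))).
by rewrite !signrMK => /eqP; rewrite eqz_nat => /eqP.
Qed.

Lemma gcount_small m key (key_inj : injective key) i : (m < i)%N -> @gcount m key i = 0%N.
Proof.
move=> lt; apply/eqP; rewrite cards_eq0; apply/eqP/setP => T; rewrite !inE.
apply/negP => /andP[/andP[/andP[sG _] gT] /eqP cT].
have := rank_leq_col (span (@ind m) T).
by rewrite -/(rkv _ T) (good_rank key_inj sG gT) cT leqNgt lt.
Qed.

Lemma sep_card m (T : {set {set 'I_m}}) : sep T -> (m < 2 ^ #|T|)%N.
Proof.
case/andP => /forallP H1 /forallP H2.
pose p (j : 'I_m) := [set J in T | j \in J].
have pinj : injective p.
  move=> j j' pj; apply/eqP; apply/negP => /negP ne.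
  have /exists_inP [J JT HJ] := implyP (forallP (H2 j) j') ne.
  move/setP: pj => /(_ J); rewrite !inE JT /=.
  by move=> HH; rewrite HH eqxx in HJ.
have sub : p @: setT \subset powerset T :\ set0.
  apply/subsetP => _ /imsetP[j _ ->]; rewrite !inE; apply/andP; split.
    by apply/set0Pn; have /exists_inP [J JT jJ] := H1 j; exists J; rewrite inE JT.
  by apply/subsetP => J; rewrite inE => /andP[].
have := subset_leq_card sub; rewrite card_imset // cardsT card_ord.
have H0 : set0 \in powerset T by rewrite inE sub0set.
rewrite -ltnS => H; apply: leq_trans H _.
by rewrite -(card_powerset T) (cardsD1 set0 (powerset T)) H0.
Qed.

End TWorld.

Section Bound.
Variable F : fieldType.
Local Open Scope nat_scope.

Lemma card_nonempty i : #|[set P : {set 'I_i} | P != set0]| = (2 ^ i - 1)%N.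
Proof.
have -> : [set P : {set 'I_i} | P != set0] = [set~ set0] by apply/setP => P; rewrite !inE.
by rewrite cardsC1 -cardsT -powersetT card_powerset cardsT card_ord subn1.
Qed.

Lemma gcount_large m key (key_inj : injective key) i :
  (2 ^ i <= m)%N -> @gcount F m key i = 0%N.
Proof.
move=> le; apply/eqP; rewrite cards_eq0; apply/eqP/setP => T; rewrite !inE.
apply/negP => /andP[/andP[/andP[_ sT] _] /eqP cT].
by have := sep_card sT; rewrite cT ltnNge le.
Qed.

Lemma gcount_bound m key i : (@gcount F m key i * i`! <= (2 ^ i - 1) ^_ m)%N.
Proof.
set Tsep := [set T : {set {set 'I_m}} | sep T && (#|T| == i)].
have le1 : (@gcount F m key i <= #|Tsep|)%N.
  apply: subset_leq_card; apply/subsetP => T; rewrite !inE.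
  by case/andP => /andP[/andP[_ ->] _] ->.
set Z := [set f : {ffun 'I_i -> {set 'I_m}} | injectiveb f && sep [set f t | t : 'I_i]].
pose A (T : {set {set 'I_m}}) :=
  [set f : {ffun 'I_i -> {set 'I_m}} in ffun_on (mem T) | injectiveb f].
have cardA T : T \in Tsep -> #|A T| = i`!.
  rewrite inE => /andP[_ /eqP cT].
  by rewrite card_inj_ffuns_on card_ord -ffactnn -cT.
have imA T f : T \in Tsep -> f \in A T -> T = [set f t | t : 'I_i].
  rewrite !inE => /andP[_ /eqP cT] /andP[/ffun_onP fT /injectiveP fi].
  apply/esym/eqP; rewrite eqEcard; apply/andP; split.
    by apply/subsetP => _ /imsetP[t _ ->]; apply: fT.
  by rewrite cT card_imset // card_ord.
have le2 : (#|Tsep| * i`! <= #|Z|)%N.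
  rewrite -sum_nat_const.
  rewrite (eq_bigr (fun T => #|A T|)); last by move=> T /cardA.
  have -> : \sum_(T in Tsep) #|A T| = \sum_(T in Tsep) \sum_f (f \in A T : nat).
    by apply: eq_bigr => T _; rewrite -sum1_card big_mkcond.
  rewrite exchange_big /= -sum1_card [in X in _ <= X]big_mkcond /=.
  apply: leq_sum => f _.
  pose imf := [set f t | t : 'I_i].
  apply: (@leq_trans (\sum_(T in Tsep) ((T == imf) && (f \in Z) : nat))).
    apply: leq_sum => T TS; case fA: (f \in A T) => //=.
    have eT : T = imf := imA T f TS fA.
    rewrite -eT eqxx /= inE.
    move: TS fA; rewrite !inE => /andP[sT _] /andP[_ ->] /=.
    by rewrite lt0b; move: sT; rewrite eT.
  case fZ: (f \in Z); last by rewrite big1 // => T _; rewrite andbF.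
  apply: (@leq_trans (\sum_(T | T == imf) 1)); last by rewrite big_pred1_eq.
  rewrite [X in _ <= X]big_mkcond /=; rewrite big_mkcond /=.
  by apply: leq_sum => T _; rewrite andbT; case: (T \in Tsep); case: (T == imf).
pose Phi (f : {ffun 'I_i -> {set 'I_m}}) := [ffun j : 'I_m => [set t : 'I_i | j \in f t]].
have Phi_inj : injective Phi.
  move=> f g e; apply/ffunP => t; apply/setP => j.
  by move/ffunP: e => /(_ j) /setP /(_ t); rewrite !ffunE !inE.
set W := [set g : {ffun 'I_m -> {set 'I_i}} in ffun_on (mem [set P : {set 'I_i} | P != set0]) | injectiveb g].
have le3 : #|Z| <= #|W|.
  rewrite -(card_imset _ Phi_inj); apply: subset_leq_card; apply/subsetP => _ /imsetP[f fZ ->].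
  move: fZ; rewrite !inE => /andP[_ /andP[/forallP H1 /forallP H2]].
  apply/andP; split.
    apply/ffun_onP => j; rewrite ffunE !inE.
    have /exists_inP [J /imsetP[t _ ->] jJ] := H1 j.
    by apply/set0Pn; exists t; rewrite inE.
  apply/injectiveP => j j'; rewrite !ffunE => e; apply/eqP; apply/negP => /negP ne.
  have /exists_inP [J /imsetP[t _ ->] HJ] := implyP (forallP (H2 j) j') ne.
  by move/setP: e => /(_ t); rewrite !inE => HH; rewrite HH eqxx in HJ.
have cW : #|W| = (2 ^ i - 1) ^_ m.
  by rewrite card_inj_ffuns_on card_ord card_nonempty.
apply: leq_trans (leq_mul le1 (leqnn _)) _.
by apply: leq_trans le2 _; rewrite -cW.
Qed.
End Bound.

Section Pos.
Variable F : fieldType.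
Local Open Scope nat_scope.

Lemma gcount_pos m i : i <= m -> m < 2 ^ i ->
  exists2 key : {set 'I_m} -> nat, injective key & 0 < @gcount F m key i.
Proof.
move=> le1 le2.
set s1 := [seq [set t] | t <- enum 'I_i].
set s := s1 ++ [seq P <- enum {set 'I_i} | (P != set0) && (P \notin s1)].
have us : uniq s.
  rewrite cat_uniq map_inj_uniq ?enum_uniq //=; last exact: set1_inj.
  rewrite filter_uniq ?enum_uniq // andbT.
  apply/hasPn => P; rewrite mem_filter => /andP[/andP[_ H] _]; exact: H.
have ms P : (P \in s) = (P != set0).
  rewrite mem_cat mem_filter mem_enum andbT.
  case: (boolP (P \in s1)) => [/mapP[t _ ->]|_] /=; last by rewrite andbT.
  by apply/esym/set0Pn; exists t; rewrite inE.
have ss : size s = 2 ^ i - 1.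
  rewrite -(card_uniqP us) -card_nonempty; apply: eq_card => P.
  by rewrite ms inE.
have ms' : m <= size s by rewrite ss -ltnS subn1 prednK ?expn_gt0.
pose p (j : 'I_m) := nth set0 s j.
have pne j : p j != set0 by rewrite -ms mem_nth // (leq_trans (ltn_ord j)).
have pinj : injective p.
  move=> j j' /eqP; rewrite /p nth_uniq ?(leq_trans (ltn_ord _)) // => /eqP.
  exact: val_inj.
pose w (t : 'I_i) : 'I_m := widen_ord le1 t.
have pw t : p (w t) = [set t].
  rewrite /p /= nth_cat size_map size_enum_ord ltn_ord.
  by rewrite (nth_map t) ?size_enum_ord // nth_ord_enum.
pose J (t : 'I_i) := [set j : 'I_m | t \in p j].
have wJ t s0 : (w t \in J s0) = (s0 == t) by rewrite inE pw inE.
have Jinj : injective J.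
  by move=> t t' e; apply/eqP; rewrite -wJ e wJ.
set T0 := J @: setT.
have cT0 : #|T0| = i by rewrite card_imset // cardsT card_ord.
pose N := #|{set 'I_m}|.
pose key (e : {set 'I_m}) := if e \in T0 then nat_of_ord (enum_rank e) else N + enum_rank e.
have key_inj : injective key.
  move=> e e'; rewrite /key.
  case: (e \in T0); case: (e' \in T0) => H.
  - by apply: enum_rank_inj; apply: val_inj.
  - have hN : enum_rank e < N by exact: ltn_ord.
    by move: hN H; rewrite /N; lia.
  - have hN : enum_rank e' < N by exact: ltn_ord.
    by move: hN H; rewrite /N; lia.
  - by apply: enum_rank_inj; apply: val_inj; apply: (addnI H).
exists key => //.
rewrite lt0n cards_eq0; apply/set0Pn; exists T0; rewrite !inE cT0 eqxx andbT.
apply/andP; split; [apply/andP; split|].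
- apply/subsetP => _ /imsetP[t _ ->]; rewrite inE; apply/set0Pn.
  by exists (w t); rewrite wJ.
- apply/andP; split.
    apply/forallP => j; have /set0Pn [t tp] := pne j.
    by apply/exists_inP; exists (J t); rewrite ?imset_f // inE.
  apply/forallP => j; apply/forallP => j'; apply/implyP => ne.
  have [t Ht] : exists t, (t \in p j) != (t \in p j').
    apply/existsP; apply: contraR ne => /existsPn H.
    by apply/eqP; apply: pinj; apply/setP => t; move/negbNE: (H t) => /eqP.
  by apply/exists_inP; exists (J t); rewrite ?imset_f // !inE.
- apply/forallP => e; rewrite /bad negb_and.
  case eT: (e \in T0).
    case/imsetP: eT => t _ ->.
    rewrite orbC; apply/orP; left; apply/negP => H.
    have : (span (@ind F m) (above key (J t) T0) <= kermx (cj F (w t)))%MS.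
      rewrite span_ker; apply/forall_inP => f; rewrite !inE => /andP[/imsetP[s0 _ ->] lt].
      rewrite ind_col wJ; apply/eqP => st; move: lt; rewrite st ltnn //.
    move=> /(submx_trans H); rewrite sub_kermx ind_col wJ eqxx //.
  have -> : above key e T0 = set0.
    apply/setP => f; rewrite !inE; apply/negP => /andP[fT].
    rewrite /key eT fT.
    have hN : enum_rank f < N by exact: ltn_ord.
    by move: hN; lia.
  rewrite span0 submx0; case: (set_0Vmem e) => [->|[x xe]]; first by rewrite inE eqxx.
  apply/orP; right; apply/eqP => /matrixP/(_ ord0 x); rewrite !mxE xe => /eqP.
  by rewrite oner_eq0.
Qed.
End Pos.

Notation RR := Rdefinitions.R.

Lemma ind_tr n (I : {set 'I_n}) : (ind RR I)^T = normal_vec I.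
Proof. by apply/matrixP => a b; rewrite !mxE. Qed.

Lemma rk_rkv n (S : {set {set 'I_n}}) : rk S = rkv (ind RR (m:=n)) S.
Proof.
rewrite /rk.
have key p (X : 'M[RR]_(p, n)) :
  (X <= \bigcap_(I in S) hyperplane I)%MS = (X <= kermx (span (ind RR (m:=n)) S)^T)%MS.
  rewrite sub_kermx -trmx_eq0 trmx_mul trmxK -sub_kermx span_ker.
  apply/sub_bigcapmxP/forall_inP => H I IS.
    by rewrite -trmx_eq0 trmx_mul trmxK ind_tr -sub_kermx H.
  by rewrite /hyperplane sub_kermx -ind_tr -trmx_eq0 trmx_mul trmxK H.
have eq : (\bigcap_(I in S) hyperplane I :=: kermx (span (ind RR (m:=n)) S)^T)%MS.
  by apply/eqmxP/andP; split; [rewrite -key submx_refl | rewrite key submx_refl].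
rewrite eq mxrank_ker mxrank_tr /rkv.
by rewrite subKn // rank_leq_col.
Qed.

Lemma rkv_full n : rkv (ind RR (m:=n)) (resonance_idx n) = n.
Proof.
apply/eqP; rewrite eqn_leq rank_leq_col /=.
have h1 : \rank (1%:M : 'M[RR]_n) = n by apply: mxrank1.
apply: leq_trans (eq_leq (esym h1)) _; apply: mxrankS; apply/row_subP => j.
have -> : row j 1%:M = ind RR [set j].
  by apply/matrixP => a b; rewrite !mxE inE eq_sym; case: (b == j).
by apply: mem_span; rewrite inE; apply/set0Pn; exists j; rewrite inE.
Qed.

Lemma coef_char n i : (i <= n)%N ->
  (char_poly_res n)`_(n - i) =
  \sum_(S : {set {set 'I_n}} | (S \subset resonance_idx n) && (rkv (ind RR (m:=n)) S == i))
     (-1) ^+ #|S|.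
Proof.
move=> le; rewrite /char_poly_res coef_sum.
rewrite big_mkcond [RHS]big_mkcond /=; apply: eq_bigr => S _.
rewrite coefZ coefXn !rk_rkv rkv_full inE.
case: (S \subset resonance_idx n) => //=.
set r := rkv (ind RR (m:=n)) S.
have hr : (r <= n)%N by exact: rank_leq_col.
have -> : (n - i == n - r)%N = (r == i).
  by apply/eqP/eqP; lia.
by case: eqP; rewrite ?mulr1 ?mulr0.
Qed.

Definition pat n (I : {set 'I_n}) (x : 'I_n.+1) : bool :=
  if unlift ord_max x is Some y then y \in I else false.

Lemma pat_lift n (I : {set 'I_n}) y : pat I (lift ord_max y) = (y \in I).
Proof. by rewrite /pat liftK. Qed.

Lemma pat_max n (I : {set 'I_n}) : pat I ord_max = false.
Proof. by rewrite /pat unlift_none. Qed.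

Definition VP n (S : {set {set 'I_n}}) :=
  preim_partition (fun x => [set I in S | pat I x]) [set: 'I_n.+1].

Lemma preim_eq (T rT : finType) (f : T -> rT) (P : {set {set T}}) :
  partition P [set: T] ->
  (preim_partition f [set: T] == P) = [forall x, forall y, (f x == f y) == (pblock P x == pblock P y)].
Proof.
move=> hP; apply/eqP/forallP => [<- x|H].
  apply/forallP => y; have hP' := preim_partitionP f [set: T].
  rewrite eq_pblock ?(partition_trivIset hP') ?(cover_partition hP') ?inE //.
  by rewrite (pblock_equivalence_partition) ?inE //; split => // /eqP ->.
rewrite -[in RHS](preim_partition_pblock hP); apply/setP => B.
rewrite /preim_partition /equivalence_partition.
apply/imsetP/imsetP => [[x _ ->]|[x _ ->]]; exists x => //; apply/setP => y;
  by rewrite !inE (eqP (forallP (H x) y)).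
Qed.

Section Fiber.
Variables (F : fieldType) (n : nat) (P : {set {set 'I_n.+1}}).
Hypothesis hP : partition P [set: 'I_n.+1].

Definition dblk := pblock P ord_max.
Definition Qb := P :\ dblk.
Definition mb := #|Qb|.
Definition beta (b : 'I_mb) : {set 'I_n.+1} := @enum_val _ (pred_of_set Qb) b.

Lemma cP : cover P = [set: 'I_n.+1].
Proof. exact: cover_partition hP. Qed.
Lemma tP : trivIset P.
Proof. exact: partition_trivIset hP. Qed.

Lemma beta_in b : beta b \in P.
Proof. by have := enum_valP b; rewrite /beta !inE => /andP[]. Qed.
Lemma beta_nd b : beta b != dblk.
Proof. by have := enum_valP b; rewrite /beta !inE => /andP[]. Qed.
Lemma beta_inj : injective beta.
Proof. exact: enum_val_inj. Qed.
Lemma beta_pb b x : x \in beta b -> pblock P x = beta b.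
Proof. by move=> xb; apply: def_pblock tP (beta_in b) xb. Qed.
Lemma beta_disj b b' x : x \in beta b -> x \in beta b' -> b = b'.
Proof. by move=> h1 h2; apply: beta_inj; rewrite -(beta_pb h1) (beta_pb h2). Qed.
Lemma beta_max b : ord_max \notin beta b.
Proof. by apply/negP => /beta_pb h; have := beta_nd b; rewrite /dblk h eqxx. Qed.
Lemma beta_ne b : beta b != set0.
Proof. exact: partition_neq0 hP (beta_in b). Qed.
Lemma d_in x : x \in dblk -> pblock P x = dblk.
Proof.
move=> xd; apply: def_pblock tP _ xd; apply: pblock_mem; by rewrite cP.
Qed.
Lemma d_notbeta x b : x \in dblk -> x \notin beta b.
Proof.
by move=> xd; apply/negP => /beta_pb; rewrite d_in // => h; have := beta_nd b; rewrite h eqxx.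
Qed.

Definition blk (x : 'I_n.+1) : option 'I_mb := [pick b | x \in beta b].

Lemma blk_beta b x : x \in beta b -> blk x = Some b.
Proof.
move=> xb; rewrite /blk; case: pickP => [b' xb'|/(_ b)]; last by rewrite xb.
by rewrite (beta_disj xb xb').
Qed.

Lemma blk_d x : x \in dblk -> blk x = None.
Proof.
move=> xd; rewrite /blk; case: pickP => // b xb.
by have := d_notbeta b xd; rewrite xb.
Qed.

Lemma blk_cases x : (x \in dblk /\ blk x = None) \/ (exists2 b, x \in beta b & blk x = Some b).
Proof.
case: (boolP (x \in dblk)) => xd; first by left; rewrite blk_d.
right; have pbx : pblock P x \in Qb.
  rewrite !inE pblock_mem ?cP ?inE // andbT; apply: contra xd => /eqP <-.
  by rewrite mem_pblock cP inE.
exists (enum_rank_in pbx (pblock P x)).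
  by rewrite /beta (enum_rankK_in pbx pbx) mem_pblock cP inE.
by apply: blk_beta; rewrite /beta (enum_rankK_in pbx pbx) mem_pblock cP inE.
Qed.

Lemma pblock_blk x : pblock P x = if blk x is Some b then beta b else dblk.
Proof.
case: (blk_cases x) => [[xd ->]|[b xb ->]]; [exact: d_in | exact: beta_pb].
Qed.

Lemma pblock_eq x y : (pblock P x == pblock P y) = (blk x == blk y).
Proof.
rewrite !pblock_blk; case: (blk x) => [b|]; case: (blk y) => [b'|] //=.
- by apply/eqP/eqP => [/beta_inj ->|[->]].
- by rewrite (negbTE (beta_nd b)).
- by rewrite eq_sym (negbTE (beta_nd b')).
- by rewrite !eqxx.
Qed.

Lemma blk_surj (o : option 'I_mb) : exists x, blk x = o.
Proof.
case: o => [b|]; last by exists ord_max; apply: blk_d; rewrite mem_pblock cP inE.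
have /set0Pn [x xb] := beta_ne b; by exists x; apply: blk_beta.
Qed.

Definition phi (J : {set 'I_mb}) : {set 'I_n} :=
  [set y : 'I_n | [exists b in J, lift ord_max y \in beta b]].

Definition optin (o : option 'I_mb) (J : {set 'I_mb}) :=
  if o is Some b then b \in J else false.

Lemma pat_phi J x : pat (phi J) x = optin (blk x) J.
Proof.
rewrite /pat; case: unliftP => [y ->|->]; last by rewrite blk_d // mem_pblock cP inE.
rewrite inE; case: (blk_cases (lift ord_max y)) => [[xd ->]|[b xb ->]] /=.
  by apply/exists_inP => [[b _ xb]]; have := d_notbeta b xd; rewrite xb.
apply/exists_inP/idP => [[b' b'J xb']|bJ]; last by exists b.
by rewrite (beta_disj xb xb').
Qed.

Lemma phi_inj : injective phi.
Proof.
move=> J J' e; apply/setP => b; have /set0Pn [x xb] := beta_ne b.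
by have := pat_phi J x; rewrite e pat_phi (blk_beta xb).
Qed.

Lemma phi_ne J : J != set0 -> phi J != set0.
Proof.
case/set0Pn => b bJ; have /set0Pn [x xb] := beta_ne b.
case: (unliftP ord_max x) => [y exy|exy]; last by rewrite exy (negbTE (beta_max b)) in xb.
by apply/set0Pn; exists y; rewrite inE; apply/exists_inP; exists b; rewrite -?exy.
Qed.

Lemma phi0 : phi set0 = set0.
Proof. by apply/setP => y; rewrite !inE; apply/exists_inP => [[b]]; rewrite inE. Qed.

Definition Mphi : 'M[F]_(mb, n) :=
  \matrix_(b, y) (if lift ord_max y \in beta b then 1 else 0).

Lemma ind_phi J : ind F (phi J) = ind F J *m Mphi.
Proof.
apply/matrixP => a y; rewrite !mxE.
case: (blk_cases (lift ord_max y)) => [[xd bN]|[b0 xb bS]].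
  rewrite big1; last by move=> b _; rewrite !mxE (negbTE (d_notbeta b xd)) mulr0.
  have := pat_phi J (lift ord_max y); rewrite pat_lift bN /= => ->; done.
rewrite (bigD1 b0) //= big1 ?addr0; last first.
  move=> b nb; rewrite !mxE; case: (b \in J); rewrite ?mul0r ?mul1r //.
  by case: ifP => // xb'; rewrite (beta_disj xb xb') eqxx in nb.
have := pat_phi J (lift ord_max y); rewrite pat_lift bS /= => ->.
by rewrite !mxE xb mulr1.
Qed.

Lemma Mphi_free : row_free Mphi.
Proof.
apply/row_freeP.
exists (\matrix_(y, b) (if [pick y' | lift ord_max y' \in beta b] == Some y then 1 else 0)).
apply/matrixP => b b'; rewrite !mxE.
under eq_bigr do rewrite !mxE.
case: (pickP (fun y' => lift ord_max y' \in beta b')) => [y0 y0b|H]; last first.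
  have /set0Pn [x xb] := beta_ne b'.
  case: (unliftP ord_max x) => [y exy|exy]; last by rewrite exy (negbTE (beta_max b')) in xb.
  by have := H y; rewrite -exy xb.
rewrite (bigD1 y0) //= big1 ?addr0; last first.
  by move=> y ny; case: eqP => [[e]|]; [rewrite e eqxx in ny | rewrite mulr0].
rewrite eqxx mulr1; case: ifP => h.
  by rewrite (beta_disj h y0b) eqxx.
by case: eqP => // e; rewrite e y0b in h.
Qed.

Lemma rkv_phi (T : {set {set 'I_mb}}) :
  rkv (ind F (m:=n)) (phi @: T) = rkv (ind F (m:=mb)) T.
Proof.
rewrite /rkv -(mxrankMfree _ Mphi_free); apply: eqmx_rank.
rewrite /span big_imset /=; last by move=> J J' _ _; apply: phi_inj.
apply/andP; split.
  apply/sumsmx_subP => J JT; rewrite genmxE ind_phi; apply: submxMr.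
  by apply: mem_span.
rewrite (sumsmxMr_gen _ _ Mphi); apply/sumsmx_subP => J JT.
rewrite (sumsmx_sup J) // !genmxE.
by rewrite (eqmxMr Mphi (genmxE (ind F J))) ind_phi submx_refl.
Qed.

Lemma card_phi (T : {set {set 'I_mb}}) : #|phi @: T| = #|T|.
Proof. exact: card_imset phi_inj. Qed.

Lemma sep_opt (T : {set {set 'I_mb}}) :
  sep T = [forall o : option 'I_mb, forall o' : option 'I_mb,
            [forall J in T, optin o J == optin o' J] == (o == o')].
Proof.
apply/idP/idP => [/andP[/forallP H1 /forallP H2]|/forallP H].
  apply/forallP => o; apply/forallP => o'.
  case: o => [b|]; case: o' => [b'|] /=.
  - case: (eqVneq b b') => [->|ne]; first by rewrite eqxx eqb_id; apply/forall_inP => J _.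
    rewrite (_ : (Some b == Some b') = false) ?eqbF_neg; last by apply/eqP => [[]]; apply/eqP.
    have /exists_inP [J JT HJ] := implyP (forallP (H2 b) b') ne.
    by apply/negP => /forall_inP /(_ J JT) /eqP HH; rewrite HH eqxx in HJ.
  - have /exists_inP [J JT HJ] := H1 b.
    rewrite eqbF_neg.
    by apply/negP => /forall_inP /(_ J JT); rewrite HJ.
  - have /exists_inP [J JT HJ] := H1 b'.
    rewrite eqbF_neg.
    by apply/negP => /forall_inP /(_ J JT); rewrite HJ.
  - by rewrite eqxx eqb_id; apply/forall_inP.
apply/andP; split.
  apply/forallP => j; move/forallP: (H (Some j)) => /(_ None) /=.
  rewrite eqbF_neg negb_forall_in => /exists_inP [J JT HJ].
  by apply/exists_inP; exists J => //; move: HJ; case: (j \in J).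
apply/forallP => j; apply/forallP => j'; apply/implyP => ne.
move/forallP: (H (Some j)) => /(_ (Some j')) /=.
rewrite (_ : (Some j == Some j') = false); last by apply/eqP => [[]]; apply/eqP.
rewrite eqbF_neg negb_forall_in => /exists_inP [J JT HJ].
by apply/exists_inP; exists J.
Qed.

Lemma forall_phi (T : {set {set 'I_mb}}) (Pr : {set 'I_n} -> bool) :
  [forall I in phi @: T, Pr I] = [forall J in T, Pr (phi J)].
Proof.
apply/forall_inP/forall_inP => H J JT; first by apply: H; apply: imset_f.
by case/imsetP: JT => J' J'T ->; apply: H.
Qed.

Lemma setSeq (S : {set {set 'I_n}}) (p q : {set 'I_n} -> bool) :
  ([set I in S | p I] == [set I in S | q I]) = [forall I in S, p I == q I].
Proof.
apply/eqP/forall_inP => [/setP H I IS|H]; first by have := H I; rewrite !inE IS /= => ->.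
by apply/setP => I; rewrite !inE; case IS: (I \in S) => //=; apply/eqP; apply: H.
Qed.

Definition Tset := [set T : {set {set 'I_mb}} | (T \subset Gm mb) && sep T].

Lemma VP_rel (S : {set {set 'I_n}}) :
  (VP S == P) = [forall x, forall y, [forall I in S, pat I x == pat I y] == (blk x == blk y)].
Proof.
rewrite /VP preim_eq //; apply: eq_forallb => x; apply: eq_forallb => y.
by rewrite setSeq pblock_eq.
Qed.

Lemma fiber_char (S : {set {set 'I_n}}) : S \subset resonance_idx n ->
  (VP S == P) = (S \in [set phi @: T | T : {set {set 'I_mb}} in Tset]).
Proof.
move=> sR; rewrite VP_rel; apply/idP/idP => [/forallP H|/imsetP[T]].
  have Hr x y : [forall I in S, pat I x == pat I y] = (blk x == blk y).
    exact: eqP (forallP (H x) y).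
  set T := [set J | phi J \in S].
  have eS : S = phi @: T.
    apply/setP => I; apply/idP/idP => [IS|/imsetP[J]]; last by rewrite inE => ? ->.
    pose JI := [set b | [exists y in I, lift ord_max y \in beta b]].
    have eI : phi JI = I.
      apply/setP => y; rewrite inE; apply/exists_inP/idP => [[b]|yI].
        rewrite inE => /exists_inP [y' y'I y'b] yb.
        have := Hr (lift ord_max y) (lift ord_max y').
        rewrite (blk_beta yb) (blk_beta y'b) eqxx => /forall_inP /(_ I IS).
        by rewrite !pat_lift y'I => /eqP.
      case: (blk_cases (lift ord_max y)) => [[yd yN]|[b yb _]].
        have := Hr (lift ord_max y) ord_max.
        rewrite yN blk_d ?mem_pblock ?cP ?inE // eqxx => /forall_inP /(_ I IS).
        by rewrite pat_lift pat_max yI.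
      by exists b => //; rewrite inE; apply/exists_inP; exists y.
    by rewrite -eI; apply: imset_f; rewrite inE eI.
  apply/imsetP; exists T => //; rewrite inE; apply/andP; split.
    apply/subsetP => J; rewrite !inE => JS; apply/negP => /eqP J0.
    by move: (subsetP sR _ JS); rewrite J0 phi0 inE eqxx.
  rewrite sep_opt; apply/forallP => o; apply/forallP => o'.
  have [x <-] := blk_surj o; have [y <-] := blk_surj o'.
  rewrite -Hr eS forall_phi; apply/eqP; apply: eq_forallb => J.
  by rewrite !pat_phi.
rewrite inE => /andP[_ sT] ->; apply/forallP => x; apply/forallP => y.
rewrite forall_phi.
have -> : [forall J in T, pat (phi J) x == pat (phi J) y] =
          [forall J in T, optin (blk x) J == optin (blk y) J].
  by apply: eq_forallb => J; rewrite !pat_phi.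
by move: sT; rewrite sep_opt => /forallP /(_ (blk x)) /forallP /(_ (blk y)).
Qed.

Lemma fiber_sum i :
  \sum_(S : {set {set 'I_n}} | (S \subset resonance_idx n) &&
        (rkv (ind F (m:=n)) S == i) && (VP S == P)) (-1) ^+ #|S| = Dsum F mb i.
Proof.
rewrite (eq_bigl (fun S => (S \in [set phi @: T | T : {set {set 'I_mb}} in Tset]) &&
                            (rkv (ind F (m:=n)) S == i))); last first.
  move=> S; case sR: (S \subset resonance_idx n) => /=.
    by rewrite fiber_char // andbC.
  apply/esym/negbTE; apply/negP => /andP[/imsetP[T]].
  rewrite inE => /andP[sG _] eS.
  suff : S \subset resonance_idx n by rewrite sR.
  rewrite eS.
  apply/subsetP => _ /imsetP[J JT ->]; rewrite inE; apply: phi_ne.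
  by move/subsetP: sG => /(_ J JT); rewrite inE.
rewrite big_mkcondr /= big_imset /=; last first.
  by move=> T T' _ _; apply: imset_inj; apply: phi_inj.
rewrite /Dsum [RHS]big_mkcondr /=; apply: eq_big => T; first by rewrite inE.
by move=> _; rewrite rkv_phi card_phi.
Qed.

End Fiber.

Lemma card_Qb n (P : {set {set 'I_n.+1}}) : partition P [set: 'I_n.+1] ->
  #|Qb P| = (#|P| - 1)%N.
Proof.
move=> hP; rewrite /Qb (cardsD1 (dblk P) P) pblock_mem ?(cover_partition hP) ?inE //.
by rewrite add1n subn1.
Qed.

Lemma total_sum n i :
  \sum_(S : {set {set 'I_n}} | (S \subset resonance_idx n) && (rkv (ind RR (m:=n)) S == i))
     (-1) ^+ #|S|
  = \sum_(P : {set {set 'I_n.+1}} | partition P [set: 'I_n.+1]) Dsum RR (#|P| - 1) i.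
Proof.
rewrite (partition_big (@VP n) (fun P => partition P [set: 'I_n.+1])) /=; last first.
  by move=> S _; apply: preim_partitionP.
apply: eq_bigr => P hP; rewrite -(card_Qb hP) -(fiber_sum RR hP i).
by apply: eq_bigl => S.
Qed.

Definition keyc m (J : {set 'I_m}) : nat := enum_rank J.
Lemma keyc_inj m : injective (@keyc m).
Proof. by move=> a b /val_inj/enum_rank_inj. Qed.

Definition cc (i k : nat) : nat := @gcount RR k.-1 (@keyc _) i.

Lemma part_card N (P : {set {set 'I_N}}) : partition P [set: 'I_N] -> (#|P| <= N)%N.
Proof.
move=> hP; have := card_partition hP; rewrite cardsT card_ord => eN.
rewrite [X in (_ <= X)%N]eN -sum1_card; apply: leq_sum => A AP; rewrite lt0n cards_eq0.
exact: partition_neq0 hP AP.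
Qed.

Lemma stirling2_0 N k : (N < k)%N -> stirling2 N k = 0%N.
Proof.
move=> lt; apply/eqP; rewrite cards_eq0; apply/eqP/setP => P; rewrite !inE.
apply/negP => /andP[hP /eqP cP]; have := part_card hP; rewrite cP leqNgt lt.
done.
Qed.

Lemma sum_by_card (T : finType) (A : pred T) (c : T -> nat) (f : nat -> nat) B :
  (forall x, A x -> c x < B)%N ->
  (\sum_(x | A x) f (c x) = \sum_(k < B) f k * #|[set x | A x & c x == k]|)%N.
Proof.
move=> Hc.
have e x : A x -> f (c x) = (\sum_(k < B) (c x == k) * f k)%N.
  move=> Ax; rewrite (bigD1 (Ordinal (Hc x Ax))) //= eqxx mul1n big1 ?addn0 //.
  move=> k nk; rewrite (_ : (c x == k) = false) //; apply/eqP => ek.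
  by move/negP: nk; apply; apply/eqP/val_inj.
rewrite (eq_bigr _ e) exchange_big /=; apply: eq_bigr => k _.
rewrite -big_distrl /= mulnC; congr (_ * _)%N.
rewrite -sum1_card big_mkcond [RHS]big_mkcond /=; apply: eq_bigr => x _.
by rewrite inE; case: (A x); case: (c x == k).
Qed.

Lemma sum_range (h : nat -> nat) a b c : (a <= b)%N ->
  (forall k, k < a -> h k = 0)%N -> (forall k, b <= k -> h k = 0)%N ->
  (forall k, c <= k -> h k = 0)%N ->
  (\sum_(k < c) h k = \sum_(a <= k < b) h k)%N.
Proof.
move=> ab ha hb hc.
have z m1 m2 : (forall k, m1 <= k < m2 -> h k = 0)%N -> (\sum_(m1 <= k < m2) h k = 0)%N.
  by move=> H; rewrite big_nat_cond big1 // => k /andP[hk _]; apply: H.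
transitivity (\sum_(0 <= k < b + c) h k)%N.
  rewrite -(big_mkord xpredT) [RHS](big_cat_nat _ (n := c)) ?leq_addl //= (z c) ?addn0 //.
  by move=> k /andP[hk _]; apply: hc.
rewrite [LHS](big_cat_nat _ (n := a)) //=; last by apply: leq_trans ab (leq_addr _ _).
rewrite z ?add0n; last by move=> k /andP[_ hk]; apply: ha.
rewrite [LHS](big_cat_nat _ (n := b)) //=; last by apply: leq_addr.
by rewrite (z b) ?addn0 // => k /andP[hk _]; apply: hb.
Qed.


Lemma Dsum_cc m i : Dsum RR m i = (-1) ^+ i * (cc i m.+1)%:Z.
Proof. by rewrite /cc /= (@Dsum_good RR m _ (@keyc_inj m)). Qed.

Lemma cc_zero i k : (0 < k)%N -> (k <= i \/ 2 ^ i < k)%N -> cc i k = 0%N.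
Proof.
move=> k0; rewrite /cc; case=> H.
  by apply: gcount_small; [apply: keyc_inj | move: H k0; case: k => //= k; lia].
apply: gcount_large; first by apply: keyc_inj.
by move: H k0; case: k => //= k; rewrite ltnS.
Qed.

Lemma betti_eq n i : (1 <= n)%N ->
  betti n i = (\sum_(i + 1 <= k < 2 ^ i + 1) cc i k * stirling2 n.+1 k)%N.
Proof.
move=> n1; rewrite /betti; case: leqP => [le|lt]; last first.
  rewrite big_nat_cond big1 // => k /andP[/andP[hk _] _].
  by rewrite stirling2_0 ?muln0 //; lia.
rewrite coef_char // total_sum.
have e : (\sum_(P : {set {set 'I_n.+1}} | partition P [set: 'I_n.+1]) Dsum RR (#|P| - 1) i)
   = (-1) ^+ i * (\sum_(P : {set {set 'I_n.+1}} | partition P [set: 'I_n.+1]) cc i #|P|)%:Z.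
  rewrite (big_morph Posz PoszD (erefl _)) big_distrr /=.
  by apply: eq_bigr => P _; rewrite Dsum_cc /cc /= subn1.
rewrite e abszMsign absz_nat.
rewrite (@sum_by_card _ (fun P : {set {set 'I_n.+1}} => partition P [set: 'I_n.+1])
           (fun P => #|P|) (cc i) n.+2); last by move=> P hP; rewrite ltnS part_card.
have s0 : stirling2 n.+1 0 = 0%N.
  apply/eqP; rewrite cards_eq0; apply/eqP/setP => P; rewrite !inE.
  apply/negP => /andP[hP /eqP /eqP]; rewrite cards_eq0 => /eqP P0.
  by have := cover_partition hP; rewrite P0 /cover big_set0 => /setP /(_ ord0); rewrite !inE.
apply: (@sum_range (fun k => cc i k * stirling2 n.+1 k)%N).
- by rewrite leq_add2r; apply: ltnW; apply: ltn_expl.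
- move=> [|k] hk; first by rewrite s0 muln0.
  by rewrite cc_zero //; left; lia.
- move=> k hk; rewrite cc_zero //; first by apply: leq_trans hk; rewrite addn1.
  by right; rewrite -addn1.
- by move=> k hk; rewrite stirling2_0 ?muln0.
Qed.

Local Close Scope ring_scope.

Theorem theorem1p2 :
  exists c : nat -> nat -> nat,
    (forall i k : nat, (i + 1 <= k <= 2 ^ i)%N ->
       (0 < c i k)%N /\
       ((c i k)%:R <= ('C(2 ^ i - 1, k - 1))%:R * ((k - 1)`!)%:R / (i`!)%:R
         :> rat)%R) /\
    (forall i n : nat, (1 <= n)%N ->
       betti n i = (\sum_(i + 1 <= k < 2 ^ i + 1) c i k * stirling2 n.+1 k)%N).
Proof.
exists cc; split; last by move=> i n; apply: betti_eq.
move=> i k /andP[h1 h2]; split.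
  have k0 : (0 < k)%N by apply: leq_trans h1; rewrite addn1.
  have [key ki gp] := @gcount_pos RR k.-1 i ltac:(lia) ltac:(move: h2 h1 k0; case: k => //).
  by rewrite /cc (@gcount_key RR _ _ _ (@keyc_inj _) ki).
have hb := @gcount_bound RR k.-1 (@keyc _) i.
rewrite -bin_ffact in hb.
rewrite ler_pdivlMr ?ltr0n ?fact_gt0 // -!natrM ler_nat !subn1.
by rewrite -subn1; exact: hb.
Qed.
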